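(* Let $L$ be the signed Laplacian of a signed digraph and let $L_s=(L+L^\top)/2$. If $L_s$ is positive semidefinite of corank $1$, then $L$ is weight balanced (i.e. $L^\top\mathbf{1}=0$) and $-L$ is marginally stable of corank $1$.
   Context: A signed digraph has real weighted adjacency matrix $A\in\mathbb{R}^{n\times n}$ (entries of any sign). Its signed Laplacian is $L=\Sigma-A$ with $\Sigma=\mathrm{diag}(\sigma_1,\dots,\sigma_n)$, $\sigma_i=\sum_jA_{ij}$, so $L\mathbf{1}=0$. Weight balanced means $A\mathbf{1}=A^\top\mathbf{1}$, equivalently $L^\top\mathbf{1}=0$. $M$ is marginally stable if all eigenvalues have real part $\le 0$ and each eigenvalue with zero real part is a simple root of the minimal polynomial. Corank means dimension of the kernel. *)

(* Defs.v *)
From HB Require Import structures.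
From mathcomp Require Import all_boot all_order all_algebra.
From mathcomp Require Import complex.
From mathcomp Require Import reals.
Set Implicit Arguments. Unset Strict Implicit. Unset Printing Implicit Defensive.
Import Order.TTheory GRing.Theory Num.Theory.
Local Open Scope ring_scope.

Definition signed_laplacian (R : pzRingType) (n : nat) (A : 'M[R]_n) : 'M[R]_n :=
  diag_mx (\row_i \sum_j A i j) - A.

Definition psd (R : numDomainType) (n : nat) (M : 'M[R]_n) : Prop :=
  forall x : 'cV[R]_n, 0 <= (x^T *m M *m x) 0 0.

(* Corank = dimension of the (right) kernel {x | M x = 0}
   = row kernel of M^T. *)
Definition corank (F : fieldType) (n : nat) (M : 'M[F]_n) : nat :=
  \rank (kermx M^T).

Definition weight_balanced (R : pzRingType) (n : nat) (L : 'M[R]_n) : Prop :=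
  L^T *m (const_mx 1 : 'cV[R]_n) = 0.

Definition complexify (R : rcfType) (n : nat) (M : 'M[R]_n) : 'M[R[i]]_n :=
  map_mx (fun x => (x%:C)%C) M.

Definition marginally_stable (R : rcfType) (n : nat) (M : 'M[R]_n.+1) : Prop :=
  forall lam : R[i], eigenvalue (complexify M) lam ->
    Re lam <= 0 /\
    (Re lam = 0 -> mup lam (mxminpoly (complexify M)) = 1%N).

(* Main.v *)
Require Import Defs.
From HB Require Import structures.
From mathcomp Require Import all_boot all_order all_algebra.
From mathcomp Require Import complex.
From mathcomp Require Import reals.
From mathcomp Require Import ring lra.
Set Implicit Arguments. Unset Strict Implicit. Unset Printing Implicit Defensive.
Import Order.TTheory GRing.Theory Num.Theory.
Local Open Scope ring_scope.

Section Helpers.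
Variable R : realType.

Definition qf n (M : 'M[R]_n) (x : 'rV[R]_n) : R := (x *m M *m x^T) 0 0.
Definition dot n (u w : 'rV[R]_n) : R := (u *m w^T) 0 0.

Lemma dotC n (u w : 'rV[R]_n) : dot u w = dot w u.
Proof. by rewrite /dot [in LHS](_ : u *m w^T = (w *m u^T)^T) ?mxE // trmx_mul trmxK. Qed.

Lemma dot_ge0 n (u : 'rV[R]_n) : 0 <= dot u u.
Proof. rewrite /dot mxE; apply: sumr_ge0 => j _; rewrite mxE; by rewrite -expr2 sqr_ge0. Qed.

Lemma dot_eq0 n (u : 'rV[R]_n) : dot u u = 0 -> u = 0.
Proof.
rewrite /dot mxE => /eqP; rewrite psumr_eq0 => [/allP H|j _]; last by rewrite mxE -expr2 sqr_ge0.
apply/matrixP => i j; rewrite (ord1 i) !mxE.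
have := H j (mem_index_enum j); rewrite mxE -expr2 sqrf_eq0 => /eqP //.
Qed.

Lemma qf_tr n (M : 'M[R]_n) x : qf M^T x = qf M x.
Proof. by rewrite /qf [in LHS](_ : x *m M^T *m x^T = (x *m M *m x^T)^T) ?mxE // !trmx_mul trmxK mulmxA. Qed.

Lemma qfD n (M N : 'M[R]_n) x : qf (M + N) x = qf M x + qf N x.
Proof. by rewrite /qf mulmxDr mulmxDl mxE. Qed.

Lemma qfZ n (a : R) (M : 'M[R]_n) x : qf (a *: M) x = a * qf M x.
Proof. by rewrite /qf -scalemxAr -scalemxAl mxE. Qed.

Lemma qfN n (M : 'M[R]_n) x : qf (- M) x = - qf M x.
Proof. by rewrite -scaleN1r qfZ mulN1r. Qed.

Lemma quad_lemma (c d : R) : (forall t, 0 <= t * c *+ 2 + t ^+ 2 * d) -> c = 0.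
Proof.
move=> H; have d0 : 0 <= d by have := H 1 ; have := H (-1); rewrite !expr2; nra.
have := H (- c / (d + 1)).
have u0 : d + 1 != 0 by rewrite gt_eqF // ltr_wpDl.
set u := d + 1 in u0 *.
have -> : (- c / u) * c *+ 2 + (- c / u) ^+ 2 * d = - (c ^+ 2 * (d + 2)) / u ^+ 2.
  by rewrite /u; field.
rewrite pmulr_lge0 ?invr_gt0 ?exprn_gt0 ?lt_def ?u0 //= ?ler_wpDl //.
  by rewrite oppr_ge0 => H2; apply/eqP; rewrite -sqrf_eq0 eq_le sqr_ge0 andbT; nra.
Qed.

Lemma eD m n (A B : 'M[R]_(m,n)) i j : (A + B) i j = A i j + B i j.
Proof. by rewrite mxE. Qed.
Lemma eZ m n a (A : 'M[R]_(m,n)) i j : (a *: A) i j = a * A i j.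
Proof. by rewrite mxE. Qed.
Lemma eN m n (A : 'M[R]_(m,n)) i j : (- A) i j = - A i j.
Proof. by rewrite mxE. Qed.
Lemma eB m n (A B : 'M[R]_(m,n)) i j : (A - B) i j = A i j - B i j.
Proof. by rewrite !mxE. Qed.

Lemma psd_zero n (S : 'M[R]_n) (x : 'rV_n) : S^T = S -> (forall y, 0 <= qf S y) ->
  qf S x = 0 -> x *m S = 0.
Proof.
move=> sS pS qx; set y := x *m S.
have E t : (x + t *: y) *m S *m (x + t *: y)^T =
    x *m S *m x^T + (t *+ 2) *: (y *m y^T) + t^+2 *: (y *m S *m y^T).
  have h1 : x *m S *m y^T = y *m y^T by [].
  have h2 : y *m S *m x^T = y *m y^T.
    by rewrite /y -mulmxA -[in X in _ *m X]sS -trmx_mul.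
  rewrite linearD linearZ /= !mulmxDl !mulmxDr -!scalemxAl -!scalemxAr.
  rewrite h1 h2 scalerA -expr2 mulr2n scalerDl.
  by rewrite !addrA.
have : dot y y = 0.
  apply: quad_lemma (qf S y) _ => t.
  by have := pS (x + t *: y); rewrite /qf E !eD !eZ -/(qf S x) qx add0r mulrnAl.
exact: dot_eq0.
Qed.

Definition ones n : 'rV[R]_n := const_mx 1.

Lemma ones_neq0 n : ones n.+1 != 0.
Proof. by apply/eqP => /matrixP/(_ 0 0)/eqP; rewrite !mxE oner_eq0. Qed.

Lemma ker_rank1 n (S : 'M[R]_n.+1) (x : 'rV_n.+1) : S^T = S -> \rank (kermx S^T) = 1%N ->
  ones n.+1 *m S = 0 -> x *m S = 0 -> exists c, x = c *: ones n.+1.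
Proof.
move=> sS rk o0 x0.
have oK : (ones n.+1 <= kermx S^T)%MS by apply/sub_kermxP; rewrite sS.
have xK : (x <= kermx S^T)%MS by apply/sub_kermxP; rewrite sS.
have /eqP : \rank (ones n.+1) = \rank (kermx S^T) by rewrite rk rank_rV ones_neq0.
rewrite (mxrank_leqif_eq oK) => /eqmxP eq.
move: xK; rewrite -eq => /submxP [D ->].
by exists (D 0 0); rewrite {1}(mx11_scalar D) mul_scalar_mx.
Qed.

End Helpers.
Section Cx.
Variable R : realType.

Lemma Re_morph : {morph (@complex.Re R) : x y / x + y}.
Proof. by case=> a b [c d]. Qed.
Lemma Im_morph : {morph (@complex.Im R) : x y / x + y}.
Proof. by case=> a b [c d]. Qed.

Lemma ReMx m n (w : 'M[R[i]]_(m,n.+1)) (M : 'M[R]_n.+1) :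
  map_mx (@complex.Re R) (w *m complexify M) = map_mx (@complex.Re R) w *m M.
Proof.
apply/matrixP => i j; rewrite !mxE (big_morph _ Re_morph (erefl (complex.Re 0))).
apply: eq_bigr => k _; rewrite !mxE; case: (w i k) => a b /=; ring.
Qed.

Lemma ImMx m n (w : 'M[R[i]]_(m,n.+1)) (M : 'M[R]_n.+1) :
  map_mx (@complex.Im R) (w *m complexify M) = map_mx (@complex.Im R) w *m M.
Proof.
apply/matrixP => i j; rewrite !mxE (big_morph _ Im_morph (erefl (complex.Im 0))).
apply: eq_bigr => k _; rewrite !mxE; case: (w i k) => a b /=; ring.
Qed.

Lemma ReZ m n (l : R[i]) (w : 'M[R[i]]_(m,n)) :
  map_mx (@complex.Re R) (l *: w) = complex.Re l *: map_mx (@complex.Re R) w - complex.Im l *: map_mx (@complex.Im R) w.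
Proof. apply/matrixP => i j; rewrite !mxE; case: l => a b; case: (w i j) => c d /=; ring. Qed.

Lemma ImZ m n (l : R[i]) (w : 'M[R[i]]_(m,n)) :
  map_mx (@complex.Im R) (l *: w) = complex.Re l *: map_mx (@complex.Im R) w + complex.Im l *: map_mx (@complex.Re R) w.
Proof. apply/matrixP => i j; rewrite !mxE; case: l => a b; case: (w i j) => c d /=; ring. Qed.

Lemma ReIm0 m n (w : 'M[R[i]]_(m,n)) : map_mx (@complex.Re R) w = 0 -> map_mx (@complex.Im R) w = 0 -> w = 0.
Proof.
move=> /matrixP h1 /matrixP h2; apply/matrixP => i j.
have := h1 i j; have := h2 i j; rewrite !mxE; case: (w i j) => a b /= -> ->; done.
Qed.

End Cx.

Lemma map_Re0 (R : realType) m n : map_mx (@complex.Re R) (0 : 'M_(m,n)) = 0.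
Proof. by apply/matrixP => i j; rewrite !mxE. Qed.

Theorem corollary2 (R : realType) (n : nat) (A : 'M[R]_n.+1) :
  let L := signed_laplacian A in
  let Ls := 2^-1 *: (L + L^T) in
  psd Ls -> corank Ls = 1%N ->
  weight_balanced L /\ marginally_stable (- L) /\ corank (- L) = 1%N.
Proof.
move=> L Ls psdL rk.
set o := ones R n.+1.
have sLs : Ls^T = Ls by rewrite /Ls linearZ linearD /= trmxK addrC.
have pS : forall y, 0 <= qf Ls y by move=> y; have := psdL y^T; rewrite trmxK.
have qLs : forall x, qf Ls x = qf L x.
  by move=> x; rewrite /Ls qfZ qfD qf_tr; field.
have oLT : o *m L^T = 0.
  apply/matrixP => i j; rewrite (ord1 i) /L /signed_laplacian linearB /= tr_diag_mx.
  rewrite mulmxBr mul_mx_diag !mxE mul1r.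
  under [X in _ - X]eq_bigr do rewrite !mxE mul1r.
  by rewrite subrr.
have qo : qf L o = 0 by rewrite -qf_tr /qf oLT mul0mx mxE.
have oLs : o *m Ls = 0 by apply: psd_zero => //; rewrite qLs.
have oL : o *m L = 0.
  have : o *m Ls = 2^-1 *: (o *m L) by rewrite /Ls -scalemxAr mulmxDr oLT addr0.
  by rewrite oLs => /esym/eqP; rewrite scaler_eq0 invr_eq0 pnatr_eq0 /= => /eqP.
have kerL : forall x, qf L x = 0 -> exists c, x = c *: o.
  move=> x qx; apply: (ker_rank1 sLs rk oLs); apply: psd_zero => //; by rewrite qLs.
have Lo : L *m o^T = 0 by rewrite -[L]trmxK -trmx_mul oLT trmx0.
have MM : forall x : 'rV_n.+1, x *m (- L) *m (- L) = 0 -> x *m (- L) = 0.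
  move=> x h; set z := x *m - L.
  have zL : z *m L = 0 by move: h; rewrite -/z mulmxN => /eqP; rewrite oppr_eq0 => /eqP.
  have qz : qf L z = 0 by rewrite /qf zL mul0mx mxE.
  have [c zc] := kerL z qz.
  have : z *m o^T = 0 by rewrite /z -mulmxA mulNmx Lo oppr0 mulmx0.
  rewrite zc -scalemxAl => /matrixP/(_ 0 0); rewrite eZ mxE.
  under eq_bigr do rewrite !mxE mulr1.
  rewrite sumr_const card_ord mxE => /eqP; rewrite mulf_eq0 pnatr_eq0 orbF => /eqP ->.
  by rewrite scale0r.
split.
  by rewrite /weight_balanced -trmx_const -trmx_mul oL trmx0.
split; last first.
  rewrite /corank; apply/eqP; rewrite eqn_leq; apply/andP; split.
    have -> : 1%N = \rank o by rewrite rank_rV ones_neq0.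
    apply: mxrankS; apply/row_subP => i.
    have h : row i (kermx (-L)^T) *m (-L)^T = 0 by rewrite -row_mul mulmx_ker row0.
    set r := row i _ in h *.
    have qr : qf L r = 0.
      move: h; rewrite linearN /= mulmxN => /eqP; rewrite oppr_eq0 => /eqP h.
      by rewrite -qf_tr /qf h mul0mx mxE.
    have [c ->] := kerL r qr.
    by rewrite scalemx_sub.
  have -> : 1%N = \rank o by rewrite rank_rV ones_neq0.
  apply: mxrankS; apply/sub_kermxP; by rewrite linearN /= mulmxN oLT oppr0.
move=> lam /eigenvalueP [v hv vnz].
set CM := complexify (- L) in hv *.
set x := map_mx (@complex.Re R) v.
set y := map_mx (@complex.Im R) v.
have hx : x *m (- L) = complex.Re lam *: x - complex.Im lam *: y by rewrite -ReMx hv ReZ.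
have hy : y *m (- L) = complex.Re lam *: y + complex.Im lam *: x by rewrite -ImMx hv ImZ.
have qM : forall u, qf (- L) u <= 0 by move=> u; rewrite qfN -qLs oppr_le0.
have qx : qf (- L) x = complex.Re lam * dot x x - complex.Im lam * dot y x.
  by rewrite /qf hx mulmxBl -!scalemxAl eB !eZ.
have qy : qf (- L) y = complex.Re lam * dot y y + complex.Im lam * dot x y.
  by rewrite /qf hy mulmxDl -!scalemxAl eD !eZ.
have xy0 : x = 0 -> y = 0 -> False.
  by move=> x0 y0; move/eqP: vnz; apply; apply: ReIm0.
have Spos : 0 < dot x x + dot y y.
  rewrite lt_def addr_ge0 ?dot_ge0 // andbT; apply/eqP => h.
  have hx0 : dot x x = 0 by have := dot_ge0 x; have := dot_ge0 y; lra.
  have hy0 : dot y y = 0 by have := dot_ge0 x; have := dot_ge0 y; lra.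
  exact: xy0 (dot_eq0 hx0) (dot_eq0 hy0).
have hsum : qf (- L) x + qf (- L) y = complex.Re lam * (dot x x + dot y y).
  by rewrite qx qy (dotC x y); ring.
have qMx := qM x; have qMy := qM y.
split.
  have : complex.Re lam * (dot x x + dot y y) <= 0 by rewrite -hsum; lra.
  by rewrite -complexRe (_ : 0 = (0:R)%:C)%C // lecR pmulr_lle0.
rewrite -complexRe => /(congr1 (@complex.Re R)) /= a0.
have q0x : qf (- L) x = 0 by move: hsum; rewrite a0 mul0r; lra.
have q0y : qf (- L) y = 0 by move: hsum; rewrite a0 mul0r; lra.
have [c1 xc] : exists c, x = c *: o by apply: kerL; move: q0x; rewrite qfN => /eqP; rewrite oppr_eq0 => /eqP.
have [c2 yc] : exists c, y = c *: o by apply: kerL; move: q0y; rewrite qfN => /eqP; rewrite oppr_eq0 => /eqP.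
have xM : x *m (- L) = 0 by rewrite xc -scalemxAl mulmxN oL oppr0 scaler0.
have yM : y *m (- L) = 0 by rewrite yc -scalemxAl mulmxN oL oppr0 scaler0.
have b0 : complex.Im lam = 0.
  apply/eqP; apply/negPn/negP => bnz.
  move: hx hy; rewrite xM yM a0 !scale0r sub0r add0r => /esym/eqP; rewrite oppr_eq0 scaler_eq0 (negbTE bnz) /= => /eqP y0.
  move=> /esym/eqP; rewrite scaler_eq0 (negbTE bnz) /= => /eqP x0.
  exact: xy0 x0 y0.
have lam0 : lam = 0 by apply/eqP; rewrite eq_complex /= a0 b0 eqxx.
subst lam.
have Pnz : mxminpoly CM != 0 by rewrite monic_neq0 ?mxminpoly_monic.
apply/eqP; rewrite eqn_leq mup_leq // mup_geq //; apply/andP; split; last first.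
  rewrite expr1 dvdp_XsubCl -eigenvalue_root_min; apply/eigenvalueP; by exists v.
apply/negP => /dvdpP [q hq]; rewrite polyC0 subr0 in hq.
have qnz : q != 0 by apply: contraNneq Pnz => q0; rewrite hq q0 mul0r.
have cplx : forall u : 'rV_n.+1, u *m CM *m CM = 0 -> u *m CM = 0.
  move=> u h; apply: ReIm0.
    by rewrite ReMx; apply: MM; rewrite -!ReMx h map_Re0.
  rewrite ImMx; apply: MM; rewrite -!ImMx h.
  by apply/matrixP => i j; rewrite !mxE.
have hor : horner_mx CM (q * 'X) = 0.
  have h0 := mx_root_minpoly CM.
  rewrite hq rmorphM rmorphXn /= horner_mx_X expr2 -!mulmxE mulmxA in h0.
  rewrite rmorphM /= horner_mx_X -mulmxE.
  apply/row_matrixP => i; rewrite row0 row_mul; apply: cplx.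
  by have := congr1 (row i) h0; rewrite row0 !row_mul.
have := dvdp_leq (mulf_neq0 qnz (negbT (polyX_eq0 _))) (mxminpoly_min hor).
by rewrite hq expr2 mulrA size_mulX ?mulf_neq0 ?polyX_eq0 // ltnn.
Qed.
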